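(* Let $\tau\in\mathbb{Z}$ and let $m=2^\alpha a$, $l=2^\beta b$ with $a,b$ positive odd integers, $\alpha\geq1$, $\beta\geq0$. Then \[ 2^{2\alpha}\ \Big|\ (-1)^{m\tau+m+l}\binom{m}{l}\binom{m\tau+l-1}{m-1}-(-1)^{\frac{m\tau+m+l}{2}}\binom{m/2}{l/2}\binom{\frac{m\tau+l}{2}-1}{\frac{m}{2}-1}, \] where for $\beta=0$ the second term is set to zero.
   Context: Binomial coefficients with negative top argument are defined by $\binom{n}{k}=(-1)^k\binom{-n+k-1}{k}$ for $n<0$, $k\geq0$; for $n\geq0$ they are the usual ones (zero when $k>n$). *)

(* Defs.v *)
From HB Require Import structures.
From mathcomp Require Import all_boot all_order all_algebra.
Set Implicit Arguments. Unset Strict Implicit. Unset Printing Implicit Defensive.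
Import Order.TTheory GRing.Theory Num.Theory.
Local Open Scope ring_scope.

(* Generalized binomial coefficient with integer top argument:
   binZ n k = 'C(n,k) for n >= 0 (zero when k > n), and
   binZ n k = (-1)^k 'C(-n+k-1, k) for n < 0. *)
Definition binZ (n : int) (k : nat) : int :=
  match n with
  | Posz n' => ('C(n', k))%:Z
  | Negz n' => (-1) ^+ k * ('C(n' + k, k))%:Z
  end.
(* Note: Negz n' = -(n'+1), so -n + k - 1 = n' + k. *)

(* Main.v *)
Require Import Defs.
From HB Require Import structures.
From mathcomp Require Import all_boot all_order all_algebra.
From mathcomp Require Import ring zify.
Import Order.TTheory GRing.Theory Num.Theory.
Local Open Scope ring_scope.

Fixpoint Phi (M : nat) (X : int) : int :=
  if M is M'.+1 then Phi M' X * (X + (2 * M' + 1)%N%:Z) else 1.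
Fixpoint dPhi (M : nat) (X : int) : int :=
  if M is M'.+1 then dPhi M' X * (X + (2 * M' + 1)%N%:Z) + Phi M' X else 0.

Lemma taylor1 M X h : exists q, Phi M (X + h) = Phi M X + h * dPhi M X + h ^+ 2 * q.
Proof.
elim: M => [|M [q IH]] /=; first by exists 0; ring.
rewrite IH; exists (dPhi M X + q * (X + h + (2 * M + 1)%N%:Z)); ring.
Qed.

Lemma taylor2 M X h2 : exists q, dPhi M (X + 2 * h2) = dPhi M X + 4 * h2 * q.
Proof.
elim: M => [|M [q IH]] /=; first by exists 0; ring.
have [r Hr] := taylor1 M X (2 * h2).
rewrite IH Hr; exists (q * (X + 2 * h2 + (2 * M + 1)%N%:Z) + dPhi M X + h2 * r); ring.
Qed.

Lemma Phi_split M K X :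
  Phi (M + K) X = Phi M X * Phi K (X + (2 * M)%N%:Z) /\
  dPhi (M + K) X = dPhi M X * Phi K (X + (2 * M)%N%:Z) + Phi M X * dPhi K (X + (2 * M)%N%:Z).
Proof.
elim: K => [|K [IH1 IH2]]; first by rewrite addn0 /=; split; ring.
rewrite addnS /= IH1 IH2.
have E : (2 * (M + K) + 1)%N%:Z = (2 * M)%N%:Z + (2 * K + 1)%N%:Z by rewrite -PoszD; congr Posz; lia.
rewrite E; split; ring.
Qed.

Lemma Phi_odd M Y : exists r, Phi M (2 * Y) = 2 * r + 1.
Proof.
elim: M => [|M [r IH]] /=; first by exists 0; ring.
rewrite IH; exists (r * (2 * Y + (2 * M + 1)%N%:Z) + Y + M%:Z).
rewrite PoszD PoszM; ring.
Qed.

Lemma dPhi_par M Y : exists r, dPhi M (2 * Y) = 2 * r + M%:Z.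
Proof.
elim: M => [|M [r IH]] /=; first by exists 0; ring.
have [s Hs] := Phi_odd M Y.
rewrite IH Hs; exists (r * (2 * Y + (2 * M + 1)%N%:Z) + M%:Z * (Y + M%:Z) + s).
rewrite !PoszD; try rewrite PoszM; ring.
Qed.

Lemma L1_odd a Y : odd a ->
  exists q, Phi a (2 * Y + (2 * a)%N%:Z) + Phi a (2 * Y) = 4 * q.
Proof.
move=> oa.
have [q Hq] := taylor1 a (2 * Y) (2 * a)%N%:Z.
have [r Hr] := Phi_odd a Y.
have [s Hs] := dPhi_par a Y.
have [t Ht] : exists t, a = (2 * t + 1)%N by exists a./2; rewrite -[a in LHS]odd_double_half oa; lia.
rewrite Hq Hr Hs Ht.
exists (r + 1 + 2 * t%:Z * (t%:Z + 1) + (2 * t + 1)%N%:Z * s + (2 * t + 1)%N%:Z ^+ 2 * q).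
ring.
Qed.



Lemma F3_gen M Y : exists t,
  dPhi (M + M) (2 * Y) = dPhi M (2 * Y) * (Phi M (2 * Y + 2 * M%:Z) + Phi M (2 * Y))
     + 4 * M%:Z * t * Phi M (2 * Y).
Proof.
have [_ ->] := Phi_split M M (2 * Y).
have [t Ht] := taylor2 M (2 * Y) M%:Z.
rewrite PoszM Ht; exists t; ring.
Qed.

Lemma F3 k a Y : odd a -> (1 <= k)%N ->
  exists u, dPhi (2 ^ k * a) (2 * Y) = (2 ^ k.+1)%N%:Z * u.
Proof.
move=> oa; elim: k Y => [|k IH] Y //= _.
have E : (2 ^ k.+1 * a = 2 ^ k * a + 2 ^ k * a)%N by rewrite expnS; lia.
rewrite E; have [t ->] := F3_gen (2 ^ k * a) Y.
case: k IH E => [|k] IH E.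
- have [q Hq] := L1_odd a Y oa.
  rewrite expn0 mul1n PoszM.
  have -> : Phi a (2 * Y + 2 * a%:Z) = 4 * q - Phi a (2 * Y) by rewrite -Hq PoszM; ring.
  exists (dPhi a (2 * Y) * q + a%:Z * t * Phi a (2 * Y)).
  ring.
- have [r0 H0] := Phi_odd (2 ^ k.+1 * a) Y.
  have [u Hu] := IH Y isT.
  have [r1 H1] := Phi_odd (2 ^ k.+1 * a) (Y + (2 ^ k.+1 * a)%N%:Z).
  have E3 : 2 * Y + 2 * (2 ^ k.+1 * a)%N%:Z = 2 * (Y + (2 ^ k.+1 * a)%N%:Z) by ring.
  rewrite E3 H1 Hu H0.
  exists (u * (r1 + r0 + 1) + a%:Z * t * (2 * r0 + 1)).
  rewrite !expnS !PoszM; ring.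
Qed.

Lemma L1 k a Y : odd a -> exists q,
  Phi (2 ^ k * a) (2 * Y + 2 * (2 ^ k * a)%N%:Z)
   = (-1) ^+ (2 ^ k * a) * Phi (2 ^ k * a) (2 * Y) + (2 ^ (2 * k + 2))%N%:Z * q.
Proof.
move=> oa; case: k => [|k].
- have [q Hq] := L1_odd a Y oa.
  rewrite expn0 mul1n -signr_odd oa.
  exists q; rewrite PoszM -[Phi a _](addrK (Phi a (2 * Y))) Hq /=; ring.
- have [q Hq] := taylor1 (2 ^ k.+1 * a) (2 * Y) (2 * (2 ^ k.+1 * a)%N%:Z).
  have [u Hu] := F3 k.+1 a Y oa isT.
  rewrite Hq Hu -signr_odd oddM oddX /= mul1r.
  exists (a%:Z * u + a%:Z ^+ 2 * q).
  have -> : (2 * k.+1 + 2 = k.+1 + k.+1 + 2)%N by lia.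
  rewrite !expnD !expnS !PoszM; ring.
Qed.

Lemma shift_nat k a Y n : odd a -> exists q,
  Phi (2 ^ k * a) (2 * Y + 2 * (2 ^ k * a)%N%:Z * n%:Z)
   = ((-1) ^+ (2 ^ k * a)) ^+ n * Phi (2 ^ k * a) (2 * Y) + (2 ^ (2 * k + 2))%N%:Z * q.
Proof.
move=> oa; elim: n => [|n [q IH]].
- by exists 0; rewrite mulr0 addr0 expr0 mul1r mulr0 addr0.
- have [q2 H2] := L1 k a (Y + (2 ^ k * a)%N%:Z * n%:Z) oa.
  have E : 2 * Y + 2 * (2 ^ k * a)%N%:Z * n.+1%:Z
     = 2 * (Y + (2 ^ k * a)%N%:Z * n%:Z) + 2 * (2 ^ k * a)%N%:Z.
    by ring.
  have E' : 2 * (Y + (2 ^ k * a)%N%:Z * n%:Z) = 2 * Y + 2 * (2 ^ k * a)%N%:Z * n%:Z by ring.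
  rewrite E H2 E' IH.
  exists (q2 + (-1) ^+ (2 ^ k * a) * q).
  rewrite exprS; ring.
Qed.

Lemma shift_int k a Y (tau : int) : odd a -> exists q,
  Phi (2 ^ k * a) (2 * Y + 2 * (2 ^ k * a)%N%:Z * tau)
   = ((-1) ^+ (2 ^ k * a)) ^+ `|tau|%N * Phi (2 ^ k * a) (2 * Y) + (2 ^ (2 * k + 2))%N%:Z * q.
Proof.
move=> oa; case: tau => n.
- exact: shift_nat.
- set M := (2 ^ k * a)%N.
  have [q H] := shift_nat k a (Y + M%:Z * (Negz n)) n.+1 oa.
  rewrite -/M in H.
  have E : 2 * (Y + M%:Z * Negz n) + 2 * M%:Z * n.+1%:Z = 2 * Y.
    by rewrite NegzE; ring.
  rewrite E in H.
  have s2 : ((-1) ^+ M) ^+ n.+1 * ((-1) ^+ M) ^+ n.+1 = 1 :> int.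
    by rewrite -exprD -exprM -signr_odd oddM oddD addbb andbF.
  exists (- ((-1) ^+ M) ^+ n.+1 * q).
  have -> : `|Negz n|%N = n.+1 by [].
  rewrite H.
  have E4 : 2 * Y + 2 * M%:Z * Negz n = 2 * (Y + M%:Z * Negz n) by ring.
  rewrite E4.
  set P := Phi M _.
  set s := ((-1) ^+ M) ^+ n.+1.
  have {1}-> : P = s * s * P by rewrite s2 mul1r.
  ring.
Qed.


Fixpoint ff (x : int) (k : nat) : int :=
  if k is k'.+1 then ff x k' * (x - k'%:Z) else 1.

Lemma ff_pos n k : ff n%:Z k = (n ^_ k)%N%:Z.
Proof.
elim: k => [|k IH] /=; first by rewrite ffactn0.
rewrite IH ffactnSr PoszM.
case: (leqP k n) => hk; first by rewrite subzn.
by rewrite (ffact_small hk) !mul0r.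
Qed.

Lemma ff_neg n k : ff (Negz n) k = (-1) ^+ k * ((n + k) ^_ k)%N%:Z.
Proof.
elim: k => [|k IH] /=; first by rewrite ffactn0 expr0 mulr1.
rewrite IH addnS ffactSS PoszM NegzE exprS; ring.
Qed.

Lemma binZ_ff x k : binZ x k * (k`!)%:Z = ff x k.
Proof.
case: x => n /=.
- by rewrite ff_pos -PoszM bin_ffact.
- by rewrite ff_neg -mulrA -PoszM bin_ffact.
Qed.

Fixpoint Qp (x : int) (n : nat) : int :=
  if n is n'.+1 then Qp x n' * (2 * x + 1 - 2 * n'%:Z) else 1.

Lemma ffSS z n : ff z n.+2 = ff z n * (z - n%:Z) * (z - n.+1%:Z).
Proof. by []. Qed.

Lemma ff_double x K : ff (2 * x + 1) (2 * K + 1) = (2 ^ K)%N%:Z * ff x K * Qp x K.+1.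
Proof.
elim: K => [|K IH]; first by rewrite /= expn0; ring.
have -> : (2 * K.+1 + 1 = (2 * K + 1).+2)%N by lia.
rewrite ffSS IH expnS PoszM.
rewrite [ff x K.+1]/= [Qp x K.+2]/=.
have -> : (2 * K + 1).+1 = (2 * K + 2)%N by lia.
have -> : Qp x K.+1 = Qp x K * (2 * x + 1 - 2 * K%:Z) by [].
ring.
Qed.

Lemma fact_double k : ((2 * k)`!)%N%:Z = (2 ^ k)%N%:Z * (k`!)%:Z * Phi k 0.
Proof.
elim: k => [|k IH]; first by rewrite /= expn0 fact0; ring.
have -> : (2 * k.+1 = (2 * k).+2)%N by lia.
rewrite !factS !PoszM IH [Phi k.+1 0]/= [(2 ^ k.+1)%N]expnS !PoszM.
have -> : (2 * k).+1 = (2 * k + 1)%N by lia.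
ring.
Qed.

Lemma Phi_S1 n X : Phi n.+1 X = (X + 1) * Phi n (X + 2).
Proof.
have E := (Phi_split 1 n X).1; rewrite add1n in E; rewrite E /=.
by rewrite mul1r.
Qed.

Lemma Qp_Phi x n : Qp x n = Phi n (2 * x + 2 - 2 * n%:Z).
Proof.
elim: n x => [|n IH] x; first by [].
rewrite [Qp x n.+1]/= Phi_S1 IH.
have -> : 2 * x + 2 - 2 * n.+1%:Z + 2 = 2 * x + 2 - 2 * n%:Z.
  by ring.
ring.
Qed.

Lemma Phi_neg k : Phi k (- 2 * k%:Z) = (-1) ^+ k * Phi k 0.
Proof.
elim: k => [|k IH]; first by rewrite /= expr0 mul1r.
rewrite Phi_S1.
have -> : - 2 * k.+1%:Z + 2 = - 2 * k%:Z by ring.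
rewrite IH exprS [Phi k.+1 0]/=; ring.
Qed.

Lemma Phi_base L M : (L <= M)%N ->
  Phi M (2 * (L%:Z - M%:Z)) = (-1) ^+ (M - L) * (Phi L 0 * Phi (M - L) 0).
Proof.
move=> hLM.
have [E _] := Phi_split (M - L) L (2 * (L%:Z - M%:Z)).
rewrite -{1}(subnK hLM) E.
have -> : 2 * (L%:Z - M%:Z) + (2 * (M - L))%N%:Z = 0.
  by rewrite PoszM -subzn //; ring.
have -> : 2 * (L%:Z - M%:Z) = - 2 * (M - L)%N%:Z by rewrite -subzn //; ring.
rewrite Phi_neg; ring.
Qed.

Lemma pow2z n : (2 ^ n)%N%:Z = (2 : int) ^+ n.
Proof. by elim: n => [|n IH] //; rewrite expnS PoszM IH exprS. Qed.

Lemma coprime_odd n r : coprimez (2 ^ n)%N%:Z (2 * r + 1).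
Proof.
rewrite pow2z; apply: coprimezXl; apply/coprimezP; exists (- r, 1) => /=; ring.
Qed.

Lemma ident M L x : (1 <= M)%N -> (L <= M)%N ->
  ('C(2 * M, 2 * L))%:Z * binZ (2 * x + 1) (2 * (M - 1) + 1) * (Phi L 0 * Phi (M - L) 0)
  = ('C(M, L))%:Z * binZ x (M - 1) * Qp x M.
Proof.
move=> M1 hLM.
set F : int := (2 ^ M)%N%:Z * (L`!)%:Z * ((M - L)`!)%:Z.
have F0 : F != 0.
  by rewrite /F -!PoszM eqz_nat -lt0n !muln_gt0 expn_gt0 !fact_gt0.
apply: (mulIf F0).
have f1 := fact_double L; have f2 := fact_double (M - L).
have h2 : (2 * L <= 2 * M)%N by rewrite leq_mul2l hLM orbT.
have bf1 := congr1 Posz (bin_fact h2); rewrite -mulnBr in bf1.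
have bf2 := congr1 Posz (bin_fact hLM).
have fM : ((2 * M)`!)%:Z = (2 * M)%N%:Z * ((2 * (M - 1) + 1)`!)%:Z.
  by rewrite (_ : (2 * M = (2 * (M - 1) + 1).+1)%N) ?factS ?PoszM //; lia.
have fM' : (M`!)%:Z = M%:Z * ((M - 1)`!)%:Z.
  by rewrite {1 2}(_ : (M = (M - 1).+1)%N) ?factS ?PoszM //; lia.
have bz1 := binZ_ff (2 * x + 1) (2 * (M - 1) + 1); rewrite ff_double in bz1.
have bz2 := binZ_ff x (M - 1).
have e2 : (2 ^ M)%N%:Z = (2 ^ L)%N%:Z * (2 ^ (M - L))%N%:Z by rewrite -PoszM -expnD subnKC.
have DF : Phi L 0 * Phi (M - L) 0 * F = ((2 * L)`!)%:Z * ((2 * (M - L))`!)%:Z.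
  by rewrite f1 f2 /F e2; ring.
transitivity (('C(2 * M, 2 * L))%:Z * (((2 * L)`!)%:Z * ((2 * (M - L))`!)%:Z) * binZ (2 * x + 1) (2 * (M - 1) + 1)).
  by rewrite -DF; ring.
rewrite -!PoszM bf1 fM.
have -> : (2 * M)%N%:Z * ((2 * (M - 1) + 1)`!)%:Z * binZ (2 * x + 1) (2 * (M - 1) + 1)
  = (2 * M)%N%:Z * (binZ (2 * x + 1) (2 * (M - 1) + 1) * ((2 * (M - 1) + 1)`!)%:Z) by ring.
rewrite bz1.
transitivity ((('C(M, L))%:Z * ((L`!)%:Z * ((M - L)`!)%:Z)) * (2 ^ M)%N%:Z * binZ x (M - 1) * Qp x M).
  have bf2' : ('C(M, L))%:Z * ((L`!)%:Z * ((M - L)`!)%:Z) = (M`!)%:Z by rewrite -!PoszM bf2.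
  rewrite bf2' fM'.
  have -> : (M - 1).+1 = M by lia.
  have -> : (2 ^ M)%N%:Z = 2 * (2 ^ (M - 1))%N%:Z by rewrite -PoszM -expnS; congr Posz; congr (2 ^ _)%N; lia.
  rewrite -bz2 !PoszM; ring.
rewrite /F; ring.
Qed.

Lemma sign_even (w : int) : (-1) ^ (w * 2) = 1 :> int.
Proof.
by rewrite expN1r abszM /= -signr_odd oddM andbF.
Qed.

Lemma sign_split (M L : nat) (tau : int) : (L <= M)%N ->
  (-1) ^ (M%:Z * tau + L%:Z + M%:Z) = ((-1) ^+ M) ^+ `|tau|%N * (-1) ^+ (M - L) :> int.
Proof.
move=> hLM.
rewrite -addrA exprzDr ?unitrN1 // -PoszD.
rewrite expN1r abszM absz_nat -exprM.
congr (_ * _).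
have -> : (L + M = (M - L) + L * 2)%N by lia.
rewrite expN1r absz_nat exprD exprM sqrr_sign mulr1.
by [].


Qed.

Lemma main_even k a L M (tau : int) : odd a -> M = (2 ^ k * a)%N ->
  ((2 ^ (2 * k.+1))%N%:Z %|
     ((-1) ^ ((2 * M)%N%:Z * tau + (2 * M)%N%:Z + (2 * L)%N%:Z) * ('C(2 * M, 2 * L))%:Z
        * binZ ((2 * M)%N%:Z * tau + (2 * L)%N%:Z - 1) (2 * M - 1)
      - ((-1) ^ (divz ((2 * M)%N%:Z * tau + (2 * M)%N%:Z + (2 * L)%N%:Z) 2)
              * ('C((2 * M) %/ 2, (2 * L) %/ 2))%:Z
              * binZ (divz ((2 * M)%N%:Z * tau + (2 * L)%N%:Z) 2 - 1) ((2 * M) %/ 2 - 1))))%Z.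
Proof.
move=> oa HM.
have M1 : (1 <= M)%N by rewrite HM muln_gt0 expn_gt0 /=; case: a oa HM.
rewrite !mulKn //.
set N := M%:Z * tau + L%:Z.
have e1 : (2 * M)%N%:Z * tau + (2 * M)%N%:Z + (2 * L)%N%:Z = (N + M%:Z) * 2 by rewrite /N !PoszM; ring.
have e2 : (2 * M)%N%:Z * tau + (2 * L)%N%:Z = N * 2 by rewrite /N !PoszM; ring.
have e3 : (2 * M)%N%:Z * tau + (2 * L)%N%:Z - 1 = 2 * (N - 1) + 1 by rewrite e2; ring.
rewrite e1 e3 e2 !mulzK // sign_even mul1r.
have e4 : (2 * M - 1 = 2 * (M - 1) + 1)%N by lia.
rewrite e4.
case: (ltnP M L) => hML.
  rewrite !bin_small //; last by rewrite ltn_mul2l.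
  by rewrite !(mulr0, mul0r) subr0 dvdz0.
have cop : coprimez (2 ^ (2 * k.+1))%N%:Z (Phi L 0 * Phi (M - L) 0).
  have [r1 H1] := Phi_odd L 0; have [r2 H2] := Phi_odd (M - L) 0.
  rewrite mulr0 in H1 H2.
  by rewrite coprimezMr H1 H2 !coprime_odd.
rewrite -(Gauss_dvdzl _ cop).
have [q Hq] := shift_int k a (L%:Z - M%:Z) tau oa.
rewrite -HM Phi_base // in Hq.
have HQ : Qp (N - 1) M = Phi M (2 * (L%:Z - M%:Z) + 2 * M%:Z * tau).
  by rewrite Qp_Phi /N; congr Phi; ring.
have HS : (-1) ^ (N + M%:Z) = ((-1) ^+ M) ^+ `|tau|%N * (-1) ^+ (M - L) :> int.
  by rewrite /N sign_split.
rewrite HS.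
set C1 := ('C(2 * M, 2 * L))%:Z * binZ (2 * (N - 1) + 1) (2 * (M - 1) + 1).
set C2 := ('C(M, L))%:Z * binZ (N - 1) (M - 1).
have Id : C1 * (Phi L 0 * Phi (M - L) 0) = C2 * Qp (N - 1) M by rewrite /C1 /C2 ident.

have -> : (C1 - ((-1) ^+ M) ^+ `|tau|%N * (-1) ^+ (M - L) * ('C(M, L))%:Z * binZ (N - 1) (M - 1))
   * (Phi L 0 * Phi (M - L) 0)
   = C1 * (Phi L 0 * Phi (M - L) 0) - ((-1) ^+ M) ^+ `|tau|%N * (-1) ^+ (M - L) * C2 * (Phi L 0 * Phi (M - L) 0)
   by rewrite /C2; ring.
rewrite Id HQ Hq.
have -> : (2 * k.+1 = 2 * k + 2)%N by lia.
apply/dvdzP; exists (C2 * q); ring.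
Qed.

Lemma dvd_bin_odd k a b : odd a -> odd b -> ((2 ^ k)%N %| 'C(2 ^ k * a, b))%N.
Proof.
move=> oa ob.
case: b ob => [|b0] // ob.
have cop : coprime (2 ^ k) b0.+1 by apply: coprimeXl; rewrite coprime2n.
rewrite -(Gauss_dvdr _ cop) -mul_bin_diag.
exact: dvdn_mulr (dvdn_mulr _ (dvdnn _)).
Qed.

Lemma dvd_binZ_odd k a (N : int) r : odd a -> (1 <= k)%N -> N = 2 * r + 1 ->
  ((2 ^ k)%N%:Z %| binZ (N - 1) (2 ^ k * a - 1))%Z.
Proof.
move=> oa hk HN.
set m := (2 ^ k * a)%N.
have m1 : (1 <= m)%N by rewrite /m muln_gt0 expn_gt0 /=; exact: odd_gt0.
have dm : ((2 ^ k)%N %| m)%N by rewrite /m dvdn_mulr.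
case E : (N - 1) => [n|n].
- have cop : coprimez (2 ^ k)%N%:Z n.+1%:Z.
    have -> : n.+1%:Z = 2 * r + 1 by rewrite -addn1 PoszD -E HN; ring.
    exact: coprime_odd.
  rewrite /= -(Gauss_dvdzl _ cop) -PoszM mulnC.
  have := mul_bin_diag n.+1 (m - 1); rewrite /= (_ : (m - 1).+1 = m); last by lia.
  move=> ->; exact: (dvdn_mulr _ dm).
- have cop : coprimez (2 ^ k)%N%:Z (n + m)%N%:Z.
    have -> : (n + m)%N%:Z = 2 * ((2 ^ k.-1 * a)%N%:Z - r - 1) + 1.
      have Em : m%:Z = 2 * (2 ^ k.-1 * a)%N%:Z.
        by rewrite /m -PoszM mulnA -expnS prednK.
      rewrite PoszD Em.
      have : Negz n = N - 1 by rewrite E.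
      rewrite NegzE HN => H.
      have -> : n%:Z = - (2 * r + 1 - 1) - 1 by rewrite -H; ring.
      ring.
    exact: coprime_odd.
  rewrite /= dvdz_mull // -(Gauss_dvdzl _ cop) -PoszM mulnC.
  have := mul_bin_diag (n + m) (m - 1).
  rewrite (_ : (m - 1).+1 = m); last by lia.
  rewrite (_ : (n + m).-1 = n + (m - 1))%N; last by lia.
  move=> ->; exact: (dvdn_mulr _ dm).
Qed.

Theorem lemma4p8 (tau : int) (alpha beta a b : nat) :
  odd a -> odd b -> (1 <= alpha)%N ->
  let m : nat := (2 ^ alpha * a)%N in
  let l : nat := (2 ^ beta * b)%N in
  ((2 ^ (2 * alpha))%N%:Z %|
     ((-1) ^ (m%:Z * tau + m%:Z + l%:Z) * ('C(m, l))%:Z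
        * binZ (m%:Z * tau + l%:Z - 1) (m - 1)
      - (if beta == 0%N then 0
         else (-1) ^ (divz (m%:Z * tau + m%:Z + l%:Z) 2)
              * ('C(m %/ 2, l %/ 2))%:Z
              * binZ (divz (m%:Z * tau + l%:Z) 2 - 1) (m %/ 2 - 1))))%Z.
Proof.
move=> oa ob ha; cbv zeta.
case: beta => [|j].
- rewrite expn0 mul1n eqxx subr0 -mulrA.
  apply: dvdz_mull.
  have -> : (2 ^ (2 * alpha))%N%:Z = (2 ^ alpha)%N%:Z * (2 ^ alpha)%N%:Z
    by rewrite -PoszM -expnD; congr Posz; congr (2 ^ _)%N; lia.
  apply: dvdz_mul; first exact: dvd_bin_odd.
  have [c Hc] : exists c, b = (2 * c + 1)%N by exists b./2; rewrite -[b in LHS]odd_double_half ob; lia.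
  apply: (dvd_binZ_odd alpha a _ ((2 ^ alpha.-1 * a)%N%:Z * tau + c%:Z)) => //.
  rewrite Hc (_ : (2 ^ alpha * a)%N = (2 * (2 ^ alpha.-1 * a))%N).
    by rewrite !PoszM PoszD PoszM; ring.
  by rewrite mulnA -expnS prednK.
- case: alpha ha => [|k] // _.
  have -> : (j.+1 == 0%N) = false by [].
  rewrite (_ : (2 ^ j.+1 * b)%N = (2 * (2 ^ j * b))%N); last by rewrite expnS mulnA.
  rewrite (_ : (2 ^ k.+1 * a)%N = (2 * (2 ^ k * a))%N); last by rewrite expnS mulnA.
  exact: (main_even k a (2 ^ j * b) (2 ^ k * a) tau oa erefl).
Qed.
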